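(* For every positive integer $n$, the domination polynomial of the book graph $B_n$ is $$D(B_n,x)=(x^2+2x)^n(2x+1)+x^2(x+1)^{2n}-2x^n.$$ *)

(* Defs.v *)
From HB Require Import structures.
From mathcomp Require Import all_boot all_order all_algebra.
Set Implicit Arguments. Unset Strict Implicit. Unset Printing Implicit Defensive.
Import GRing.Theory.
Local Open Scope ring_scope.

Definition dominating (V : finType) (adj : rel V) (S : {set V}) : bool :=
  [forall v, (v \in S) || [exists u in S, adj u v]].

Definition dom_poly (V : finType) (adj : rel V) : {poly int} :=
  \sum_(S : {set V} | dominating adj S) 'X^#|S|.

(* Star K_{1,n}: vertex None is the centre, Some i (i < n) are the leaves. *)
Definition star_adj (n : nat) : rel (option 'I_n) :=
  fun x y => ((x == None) && (y != None)) || ((y == None) && (x != None)).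

Definition K2_adj : rel bool := fun a b => a != b.

Definition cart_adj (A B : finType) (ra : rel A) (rb : rel B) : rel (A * B) :=
  fun u v => ((u.1 == v.1) && rb u.2 v.2) || ((u.2 == v.2) && ra u.1 v.1).

(* Book graph B_n = K_{1,n} x K_2 (n 4-cycles sharing a common edge). *)
Definition book_adj (n : nat) : rel (option 'I_n * bool) :=
  cart_adj (@star_adj n) K2_adj.

(* Main.v *)
Require Import Defs.
From HB Require Import structures.
From mathcomp Require Import all_boot all_order all_algebra.
From mathcomp Require Import ring.
Import GRing.Theory.
Local Open Scope ring_scope.
Set Implicit Arguments. Unset Strict Implicit.

Section B.
Variable n : nat.
Notation T := (option 'I_n * bool)%type.
Notation C := (bool * bool * {ffun 'I_n -> bool * bool})%type.

Definition encb (x : C) (t : T) : bool :=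
  match t with
  | (None, c) => if c then x.1.2 else x.1.1
  | (Some i, c) => if c then (x.2 i).2 else (x.2 i).1
  end.
Definition enc (x : C) : {set T} := [set t | encb x t].
Definition dec (S : {set T}) : C :=
  ((None, false) \in S, (None, true) \in S,
   [ffun i => ((Some i, false) \in S, (Some i, true) \in S)]).

Lemma enc_bij : bijective enc.
Proof.
exists dec.
- case=> [[a b] f]; rewrite /dec !inE /=; congr (_, _, _).
  by apply/ffunP => i; rewrite ffunE !inE /=; case: (f i).
- move=> S; apply/setP => [[[i|] []]]; by rewrite inE /= ?ffunE.
Qed.

Lemma big_optionT (R : Type) (idx : R) (op : Monoid.com_law idx) (F : option 'I_n -> R) :
  \big[op/idx]_(o : option 'I_n) F o = op (F None) (\big[op/idx]_(i : 'I_n) F (Some i)).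
Proof.
rewrite (bigD1 None) //=; congr (op _ _).
rewrite (@reindex_omap _ _ _ _ _ Some (fun o => o)) /=; last by case.
by apply: eq_bigl => j; rewrite eqxx.
Qed.


Lemma existsT (Q : pred T) : [exists u, Q u] =
  [|| Q (None,false), Q (None,true) | [exists i, Q (Some i,false) || Q (Some i,true)]].
Proof.
apply/existsP/idP.
- case=> [[[i|] []]] H; rewrite ?H ?orbT //; apply/orP; right; apply/orP; right;
    apply/existsP; exists i; by rewrite H ?orbT.
- case/or3P => [H|H|/existsP [i /orP [H|H]]].
  + by exists (None,false).
  + by exists (None,true).
  + by exists (Some i,false).
  + by exists (Some i,true).
Qed.

Lemma forallT (Q : pred T) : [forall u, Q u] =
  [&& Q (None,false), Q (None,true) & [forall i, Q (Some i,false) && Q (Some i,true)]].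
Proof.
apply/forallP/and3P.
- move=> H; split; try exact: H; apply/forallP => i; by rewrite !H.
- case=> H1 H2 /forallP H3 [[i|] []] //; by case/andP: (H3 i).
Qed.

Definition xb (c : bool) : {poly int} := if c then 'X else 1.

Lemma card_enc a b f : 'X^#|enc (a,b,f)| =
  xb a * xb b * \prod_i (xb (f i).1 * xb (f i).2).
Proof.
rewrite -prodr_const big_mkcond /=.
have -> : \prod_(t:T) (if t \in enc (a,b,f) then 'X else 1) =
   \prod_(o : option 'I_n) \prod_(c : bool) (if (o,c) \in enc (a,b,f) then 'X else 1 : {poly int}).
  rewrite pair_bigA; apply: eq_bigr. by move=> -[o c] _.
rewrite big_optionT.
have -> : \prod_(i<n) \prod_(c : bool) (if (Some i, c) \in enc (a, b, f) then 'X else 1)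
   = \prod_i (xb (f i).1 * xb (f i).2) :> {poly int}.
  by apply: eq_bigr => i _; rewrite big_bool !inE /= /xb mulrC.
by rewrite big_bool !inE /= /xb [_ * (if a then _ else _)]mulrC.
Qed.

Lemma ex_eq (P : pred 'I_n) i : [exists j, P j && (Some j == Some i)] = P i.
Proof.
apply/existsP/idP => [[j /andP [Pj /eqP [<-]]] //| Pi].
by exists i; rewrite Pi eqxx.
Qed.

Lemma forall_and (P Q : pred 'I_n) : [forall i, P i && Q i] = [forall i, P i] && [forall i, Q i].
Proof.
apply/forallP/andP => [H|[/forallP H1 /forallP H2] i].
  by split; apply/forallP => i; case/andP: (H i).
by rewrite H1 H2.
Qed.

Lemma ex_eqA (P Q : pred 'I_n) i :
  [exists j, P j && ((Some j == Some i) && false || false)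
             || Q j && ((Some j == Some i) && true || false)] = Q i.
Proof.
rewrite -(ex_eq Q i); apply: eq_existsb => j.
by case: (P j); case: (Q j); case: (_ == _).
Qed.

Lemma ex_eqB (P Q : pred 'I_n) i :
  [exists j, P j && ((Some j == Some i) && true || false)
             || Q j && ((Some j == Some i) && false || false)] = P i.
Proof.
rewrite -(ex_eq P i); apply: eq_existsb => j.
by case: (P j); case: (Q j); case: (_ == _).
Qed.

Lemma ex_T (P Q : pred 'I_n) : [exists j, P j && true || Q j && false] = [exists j, P j].
Proof. by apply: eq_existsb => j; rewrite andbT andbF orbF. Qed.

Lemma ex_F (P Q : pred 'I_n) : [exists j, P j && false || Q j && true] = [exists j, Q j].
Proof. by apply: eq_existsb => j; rewrite andbT andbF. Qed.

Lemma dom_enc a b f : dominating (@book_adj n) (enc (a,b,f)) =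
  [&& a || b || [exists i, (f i).1], a || b || [exists i, (f i).2],
      [forall i, [|| (f i).1, a | (f i).2]] & [forall i, [|| (f i).2, b | (f i).1]]].
Proof.
rewrite /dominating forallT !existsT !inE /book_adj /cart_adj /star_adj /K2_adj /=.
rewrite (eq_forallb (P2 := fun i => [|| (f i).1, a | (f i).2] && [|| (f i).2, b | (f i).1])); last first.
  move=> i /=; rewrite !existsT !inE /= ?andbT ?andbF ?orbF.
  rewrite ex_eqA ex_eqB !inE /=.
  by case: (f i).1; case: (f i).2; case: a; case: b.
rewrite forall_and ex_T ex_F.
have -> : [exists j, (Some j, false) \in enc (a, b, f)] = [exists i, (f i).1].
  by apply: eq_existsb => i; rewrite inE.
have -> : [exists j, (Some j, true) \in enc (a, b, f)] = [exists i, (f i).2].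
  by apply: eq_existsb => i; rewrite inE.
by case: a; case: b.
Qed.
Definition w (p : bool * bool) := xb p.1 * xb p.2.
Definition G (Q : pred (bool * bool)) : {poly int} := \sum_p (if Q p then w p else 0).

Lemma sum_pair (H : bool * bool -> {poly int}) :
  \sum_p H p = H (true,true) + H (true,false) + (H (false,true) + H (false,false)).
Proof.
have -> : \sum_p H p = \sum_(a : bool) \sum_(b : bool) H (a,b).
  by rewrite pair_bigA; apply: eq_bigr => -[].
by rewrite !big_bool.
Qed.

Lemma sum_prod (Q : pred (bool * bool)) :
  \sum_(f : {ffun 'I_n -> bool * bool}) (if [forall i, Q (f i)] then \prod_i w (f i) else 0)
  = G Q ^+ n.
Proof.
have -> : G Q ^+ n = \prod_(i : 'I_n) G Q by rewrite prodr_const card_ord.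
rewrite /G bigA_distr_bigA /=.
apply: eq_bigr => f _.
case: (boolP [forall i, Q (f i)]) => [/forallP H|].
  by apply: eq_bigr => i _; rewrite H.
rewrite negb_forall => /existsP [i Hi].
by rewrite (bigD1 i) //= (negbTE Hi) mul0r.
Qed.

Lemma G_T : G predT = ('X + 1) ^+ 2.
Proof. rewrite /G sum_pair /w /xb /=; ring. Qed.

Lemma G_nz : G (fun p => p.1 || p.2) = 'X^2 + 2%:R *: 'X.
Proof. rewrite /G sum_pair /w /xb /= -mul_polyC polyC_natr; ring. Qed.

Lemma G_ft : G (fun p => p == (false,true)) = 'X.
Proof. rewrite /G sum_pair /w /xb /=; ring. Qed.

Lemma G_tf : G (fun p => p == (true,false)) = 'X.
Proof. rewrite /G sum_pair /w /xb /=; ring. Qed.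

Definition cond a b (f : {ffun 'I_n -> bool * bool}) :=
  [&& a || b || [exists i, (f i).1], a || b || [exists i, (f i).2],
      [forall i, [|| (f i).1, a | (f i).2]] & [forall i, [|| (f i).2, b | (f i).1]]].

Lemma sum_cond (c1 c2 : {ffun 'I_n -> bool * bool} -> bool) (P : _ -> {poly int}) :
  (forall f, c1 f = c2 f) ->
  \sum_f (if c1 f then P f else 0) = \sum_f (if c2 f then P f else 0).
Proof. by move=> H; apply: eq_bigr => f _; rewrite H. Qed.

Lemma condTT f : cond true true f = [forall i, predT (f i)].
Proof.
rewrite /cond; apply/and4P/forallP => [_ //|_]; split => //; apply/forallP => i;
  by rewrite orbT.
Qed.

Lemma condTF f : cond true false f = [forall i, (f i).1 || (f i).2].
Proof.
rewrite /cond; apply/and4P/forallP => [[_ _ _ /forallP H] i|H].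
  by move: (H i); case: (f i) => [[] []].
split => //; apply/forallP => i; first by rewrite orbT.
by move: (H i); case: (f i) => [[] []].
Qed.

Lemma condFT f : cond false true f = [forall i, (f i).1 || (f i).2].
Proof.
rewrite /cond; apply/and4P/forallP => [[_ _ /forallP H _] i|H].
  by move: (H i); case: (f i) => [[] []].
split => //; apply/forallP => i; last by rewrite orbT.
by move: (H i); case: (f i) => [[] []].
Qed.

Lemma condFF f : cond false false f =
  [&& [forall i, (f i).1 || (f i).2], [exists i, (f i).1] & [exists i, (f i).2]].
Proof.
rewrite /cond; apply/and4P/and3P => [[H1 H2 /forallP H _]|[/forallP H H1 H2]].
  split => //; apply/forallP => i; by move: (H i); case: (f i) => [[] []].
split => //; apply/forallP => i; by move: (H i); case: (f i) => [[] []].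
Qed.

Lemma ff_split (hn : (0 < n)%N) (f : {ffun 'I_n -> bool * bool}) (W : {poly int}) :
  (if [&& [forall i, (f i).1 || (f i).2], [exists i, (f i).1] & [exists i, (f i).2]] then W else 0)
  = (if [forall i, (f i).1 || (f i).2] then W else 0)
    - (if [forall i, f i == (false,true)] then W else 0)
    - (if [forall i, f i == (true,false)] then W else 0).
Proof.
set A := [forall i, _]; set E1 := [exists i, _]; set E2 := [exists i, _].
set F1 := [forall i, f i == (false,true)]; set F2 := [forall i, f i == (true,false)].
have F1A : F1 -> A.
  by move/forallP => H; apply/forallP => i; rewrite (eqP (H i)).
have F2A : F2 -> A.
  by move/forallP => H; apply/forallP => i; rewrite (eqP (H i)).
have F1E : F1 -> ~~ E1.
  by move/forallP => H; rewrite negb_exists; apply/forallP => i; rewrite (eqP (H i)).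
have F2E : F2 -> ~~ E2.
  by move/forallP => H; rewrite negb_exists; apply/forallP => i; rewrite (eqP (H i)).
have AF1 : A -> ~~ E1 -> F1.
  move/forallP => HA; rewrite negb_exists => /forallP HE; apply/forallP => i.
  by move: (HA i) (HE i); case: (f i) => [[] []].
have AF2 : A -> ~~ E2 -> F2.
  move/forallP => HA; rewrite negb_exists => /forallP HE; apply/forallP => i.
  by move: (HA i) (HE i); case: (f i) => [[] []].
have nF : ~~ (F1 && F2).
  apply/negP => /andP [/forallP H1 /forallP H2].
  by move: (H1 (Ordinal hn)) (H2 (Ordinal hn)) => /eqP ->.
case: (boolP A) => HA /=; last first.
  by rewrite (negbTE (contra F1A HA)) (negbTE (contra F2A HA)) !subr0.
case: (boolP E1) => H1 /=; case: (boolP E2) => H2 /=.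
- by rewrite (negbTE (contraL F1E H1)) (negbTE (contraL F2E H2)) !subr0.
- by rewrite (negbTE (contraL F1E H1)) (AF2 HA H2) subr0 subrr.
- by rewrite (AF1 HA H1) (negbTE (contraL F2E H2)) subr0 subrr.
- by move: nF; rewrite (AF1 HA H1) (AF2 HA H2).
Qed.

End B.
Unset Implicit Arguments.
Set Strict Implicit.

Theorem mainTheorem5 (n : nat) (hn : (0 < n)%N) :
  dom_poly (@book_adj n) =
    ('X^2 + 2%:R *: 'X) ^+ n * (2%:R *: 'X + 1)
    + 'X^2 * ('X + 1) ^+ (2 * n)
    - 2%:R *: 'X^n :> {poly int}.
Proof.
rewrite /dom_poly (reindex (@enc n)); last by apply: onW_bij; apply: enc_bij.
rewrite big_mkcond /=.
have -> : forall H : (bool * bool * {ffun 'I_n -> bool * bool}) -> {poly int},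
   \sum_x H x = \sum_(a : bool) \sum_(b : bool) \sum_(f : {ffun 'I_n -> bool * bool}) H (a,b,f).
  move=> H; rewrite pair_bigA (eq_bigr (fun ab => \sum_f H (ab.1, ab.2, f))) //.
  by rewrite pair_bigA; apply: eq_bigr => -[[a b] f].
rewrite !big_bool.
have T : forall a b, \sum_(f : {ffun 'I_n -> bool * bool})
   (if dominating (@book_adj n) (enc (a, b, f)) then 'X^#|enc (a, b, f)| else 0) =
   xb a * xb b * \sum_(f : {ffun 'I_n -> bool * bool})
     (if cond a b f then \prod_i w (f i) else 0).
  move=> a b; rewrite mulr_sumr; apply: eq_bigr => f _.
  by rewrite /cond dom_enc card_enc; case: ifP => _; rewrite ?mulr0.
rewrite !T (sum_cond _ (@condTT n)) (sum_cond _ (@condTF n)) (sum_cond _ (@condFT n)) (sum_cond _ (@condFF n)).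
rewrite (@sum_prod n predT) (@sum_prod n (fun p => p.1 || p.2)).
rewrite (eq_bigr _ (fun f _ => ff_split hn f _)) !sumrB.
rewrite (@sum_prod n (fun p => p.1 || p.2)) (@sum_prod n (fun p => p == (false,true))).
rewrite (@sum_prod n (fun p => p == (true,false))).
rewrite G_T G_nz G_ft G_tf /xb -!mul_polyC !polyC_natr exprM /=.
set A := (_ ^+ 2) ^+ n; set B := (_ + _) ^+ n; set C := 'X^n.
ring.
Qed.
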